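(* If $\mathfrak M$ is a saturated structure of cardinality $\kappa$ with $\kappa=\kappa^\omega$, then $\mathfrak M$ has the homomorphism lifting property.
   Context: Signatures are relational (possibly with constants). An infinite $\mathfrak M$ is saturated if for every sequence of fewer than $|M|$ parameters, every set of first-order formulas in one free variable over these parameters consistent with the theory of $\mathfrak M$ with the parameters named is realised in $M$. $\mathfrak M$ has the homomorphism lifting property if for all $a_1,\dots,a_k\in M^\omega$ and $b_1,\dots,b_k\in M$ such that every pp-$(\tau\cup\{c_1,\dots,c_k\})$-sentence (existentially quantified conjunction of atoms) true in $(\mathfrak M^\omega;a_1,\dots,a_k)$ is true in $(\mathfrak M;b_1,\dots,b_k)$, there is a homomorphism $f:\mathfrak M^\omega\to\mathfrak M$ (direct power) with $f(a_i)=b_i$ for all $i$. *)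

(* Defs.v *)
From mathcomp Require Import all_boot.
Set Implicit Arguments.
Unset Strict Implicit.
Unset Printing Implicit Defensive.

Record signature := Signature {
  rsym : Type;
  arity : rsym -> nat;
  csym : Type
}.

Record structure (L : signature) (M : Type) := Structure {
  rinterp : forall R : rsym L, ('I_(arity R) -> M) -> Prop;
  cinterp : csym L -> M
}.

(** Terms of [L] extended by new constant symbols indexed by [C]
    (used both for parameters and for the constants c_1..c_k). *)
Inductive term (L : signature) (C : Type) :=
| TVar : nat -> term L C
| TConst : csym L -> term L C
| TParam : C -> term L C.

Inductive fml (L : signature) (C : Type) :=
| FRel (R : rsym L) : ('I_(arity R) -> term L C) -> fml L C
| FEq : term L C -> term L C -> fml L C
| FNot : fml L C -> fml L C
| FAnd : fml L C -> fml L C -> fml L C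
| FEx : nat -> fml L C -> fml L C.

Definition upd (M : Type) (e : nat -> M) (n : nat) (m : M) : nat -> M :=
  fun i => if i == n then m else e i.

Definition eval_term L C M (S : structure L M) (p : C -> M) (e : nat -> M)
  (t : term L C) : M :=
  match t with
  | TVar n => e n
  | TConst c => cinterp S c
  | TParam c => p c
  end.

Fixpoint sat L C M (S : structure L M) (p : C -> M) (e : nat -> M)
  (phi : fml L C) : Prop :=
  match phi with
  | FRel R args => rinterp S (fun i => eval_term S p e (args i))
  | FEq t1 t2 => eval_term S p e t1 = eval_term S p e t2
  | FNot psi => ~ sat S p e psi
  | FAnd psi1 psi2 => sat S p e psi1 /\ sat S p e psi2
  | FEx n psi => exists m, sat S p (upd e n m) psi
  end.

Definition term_fv L C (t : term L C) (n : nat) : Prop :=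
  match t with TVar k => k = n | _ => False end.

Fixpoint fv L C (phi : fml L C) (n : nat) : Prop :=
  match phi with
  | FRel R args => exists i, term_fv (args i) n
  | FEq t1 t2 => term_fv t1 n \/ term_fv t2 n
  | FNot psi => fv psi n
  | FAnd psi1 psi2 => fv psi1 n \/ fv psi2 n
  | FEx k psi => k <> n /\ fv psi n
  end.

Definition sentence L C (phi : fml L C) : Prop := forall n, ~ fv phi n.

Definition holds L C M (S : structure L M) (p : C -> M) (phi : fml L C) : Prop :=
  forall e : nat -> M, sat S p e phi.

Inductive atom_conj L C : fml L C -> Prop :=
| ac_rel R args : atom_conj (@FRel L C R args)
| ac_eq t1 t2 : atom_conj (FEq t1 t2)
| ac_and f1 f2 : atom_conj f1 -> atom_conj f2 -> atom_conj (FAnd f1 f2).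

Inductive pp L C : fml L C -> Prop :=
| pp_qf f : atom_conj f -> pp f
| pp_ex n f : pp f -> pp (FEx n f).

Fixpoint In_seq (T : Type) (x : T) (l : seq T) : Prop :=
  match l with [::] => False | y :: l' => y = x \/ In_seq x l' end.

Definition card_lt (I M : Type) : Prop :=
  (exists f : I -> M, injective f) /\ ~ (exists g : M -> I, injective g).

Definition infinite_type (M : Type) : Prop := exists f : nat -> M, injective f.

(** Saturation: M infinite, and for every family of fewer than |M|
    parameters, every set of formulas in the single free variable 0 over
    these parameters which is consistent with Th(M, parameters)
    (i.e. finitely satisfiable in M) is realised in M. *)
Definition saturated L M (S : structure L M) : Prop :=
  infinite_type M /\
  forall (I : Type) (p : I -> M) (Sigma : fml L I -> Prop),
    card_lt I M ->
    (forall phi, Sigma phi -> forall n, fv phi n -> n = 0) ->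
    (forall l : seq (fml L I), (forall phi, In_seq phi l -> Sigma phi) ->
       exists m : M, forall phi, In_seq phi l -> sat S p (fun _ => m) phi) ->
    exists m : M, forall phi, Sigma phi -> sat S p (fun _ => m) phi.

Definition power L M (S : structure L M) : structure L (nat -> M) :=
  {| rinterp := fun R (x : 'I_(arity R) -> nat -> M) =>
        forall j : nat, rinterp S (fun i => x i j);
     cinterp := fun c _ => cinterp S c |}.

Definition hom L A B (SA : structure L A) (SB : structure L B) (f : A -> B) : Prop :=
  (forall (R : rsym L) (x : 'I_(arity R) -> A), rinterp SA x -> rinterp SB (fun i => f (x i)))
  /\ (forall c : csym L, f (cinterp SA c) = cinterp SB c).

Definition hom_lifting L M (S : structure L M) : Prop :=
  forall (k : nat) (a : 'I_k -> nat -> M) (b : 'I_k -> M),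
    (forall phi : fml L 'I_k, pp phi -> sentence phi ->
       holds (power S) a phi -> holds S b phi) ->
    exists f : (nat -> M) -> M, hom (power S) S f /\ forall i, f (a i) = b i.

(* Main.v *)
Require Import Defs.
From mathcomp Require Import all_boot.
From Stdlib Require Import ClassicalEpsilon FunctionalExtensionality ProofIrrelevance Classical.
Set Implicit Arguments.
Unset Strict Implicit.
Unset Printing Implicit Defensive.

Fixpoint fmapt (L : signature) (C C' : Type) (s : term L C -> term L C') (phi : fml L C) : fml L C' :=
  match phi with
  | FRel R args => FRel (fun i => s (args i))
  | FEq t1 t2 => FEq (s t1) (s t2)
  | FNot psi => FNot (fmapt s psi)
  | FAnd p1 p2 => FAnd (fmapt s p1) (fmapt s p2)
  | FEx n psi => FEx n (fmapt s psi)
  end.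

Fixpoint tlist (L : signature) (C : Type) (phi : fml L C) : seq (term L C) :=
  match phi with
  | FRel R args => map args (enum 'I_(arity R))
  | FEq t1 t2 => [:: t1; t2]
  | FAnd p1 p2 => tlist p1 ++ tlist p2
  | _ => [::]
  end.

Lemma In_seq_cat (T : Type) (x : T) l1 l2 : In_seq x (l1 ++ l2) <-> In_seq x l1 \/ In_seq x l2.
Proof. elim: l1 => [|y l IH] /=; [tauto|rewrite IH; tauto]. Qed.

Lemma In_seq_map (T U : Type) (f : T -> U) x l : In_seq x l -> In_seq (f x) (map f l).
Proof. elim: l => [|y l IH] //= [->|H]; [by left|right; exact: IH]. Qed.

Lemma In_seq_map_inv (T U : Type) (f : T -> U) y l : In_seq y (map f l) -> exists x, In_seq x l /\ y = f x.
Proof. elim: l => [|x l IH] //= [<-|/IH [z [H1 H2]]]; [by exists x; split; [left|]|by exists z; split; [right|]]. Qed.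

Lemma In_seq_mem (T : eqType) (x : T) l : In_seq x l <-> x \in l.
Proof. elim: l => [|y l IH] //=; rewrite in_cons IH; split.
- by case=> [->|->]; rewrite ?eqxx ?orbT.
- by case/orP=> [/eqP->|H]; [left|right]. Qed.

Lemma In_enum n (i : 'I_n) : In_seq i (enum 'I_n).
Proof. by apply/In_seq_mem; rewrite mem_enum. Qed.

Lemma In_args (L : signature) (C : Type) (R : rsym L) (args : 'I_(arity R) -> term L C) i :
  In_seq (args i) (tlist (FRel args)).
Proof. exact: In_seq_map (In_enum i). Qed.

Lemma sat_fmapt (L : signature) (C C' M : Type) (S : structure L M) (s : term L C -> term L C')
  p e p' e' (phi : fml L C) : atom_conj phi ->
  (forall t, In_seq t (tlist phi) -> eval_term S p' e' (s t) = eval_term S p e t) ->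
  (sat S p' e' (fmapt s phi) <-> sat S p e phi).
Proof.
elim=> [R args|t1 t2|f1 f2 _ IH1 _ IH2] H /=.
- have -> : (fun i => eval_term S p' e' (s (args i))) = (fun i => eval_term S p e (args i)).
    by apply: functional_extensionality => i; apply: H; apply: In_args.
  by [].
- by rewrite !H //=; [right; left|left].
- rewrite IH1 ?IH2 //; move=> t Ht; apply: H => /=; apply/In_seq_cat; tauto.
Qed.

Lemma ac_fmapt (L : signature) (C C' : Type) (s : term L C -> term L C') (phi : fml L C) :
  atom_conj phi -> atom_conj (fmapt s phi).
Proof. by elim=> *; constructor. Qed.

Lemma tlist_fmapt (L : signature) (C C' : Type) (s : term L C -> term L C') (phi : fml L C) :
  atom_conj phi -> tlist (fmapt s phi) = map s (tlist phi).
Proof. elim=> [R args|t1 t2|f1 f2 _ IH1 _ IH2] //=; first by rewrite -map_comp.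
by rewrite IH1 IH2 map_cat. Qed.

Lemma fmapt_id (L : signature) (C : Type) (phi : fml L C) : fmapt (fun t => t) phi = phi.
Proof. by elim: phi => //= [? -> | ? -> ? -> | ? ? ->]. Qed.

Lemma sat_ext_ac (L : signature) (C M : Type) (S : structure L M) p e p' e' (phi : fml L C) :
  atom_conj phi ->
  (forall t, In_seq t (tlist phi) -> eval_term S p' e' t = eval_term S p e t) ->
  (sat S p' e' phi <-> sat S p e phi).
Proof. move=> Hac H; rewrite -{1}(fmapt_id phi); exact: sat_fmapt. Qed.

Lemma preimage_ac (L : signature) (C C' : Type) (s : term L C -> term L C') (phi : fml L C') :
  atom_conj phi -> (forall t, In_seq t (tlist phi) -> exists t', s t' = t) ->
  exists phi', atom_conj phi' /\ fmapt s phi' = phi.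
Proof.
elim=> [R args|t1 t2|f1 f2 _ IH1 _ IH2] H.
- have H' i : exists t', s t' = args i by apply: H; apply: In_args.
  pose args' i := proj1_sig (constructive_indefinite_description _ (H' i)).
  exists (FRel args'); split; first by constructor.
  rewrite /=; congr FRel; apply: functional_extensionality => i.
  by rewrite /args'; case: constructive_indefinite_description.
- have [u1 <-] := H t1 (or_introl erefl).
  have [u2 <-] := H t2 (or_intror (or_introl erefl)).
  by exists (FEq u1 u2); split; constructor.
- have [g1 [a1 <-]] : exists g, atom_conj g /\ fmapt s g = f1.
    by apply: IH1 => t Ht; apply: H => /=; apply/In_seq_cat; left.
  have [g2 [a2 <-]] : exists g, atom_conj g /\ fmapt s g = f2.
    by apply: IH2 => t Ht; apply: H => /=; apply/In_seq_cat; right.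
  by exists (FAnd g1 g2); split; constructor.
Qed.

Lemma fv_ac (L : signature) (C : Type) (phi : fml L C) n : atom_conj phi ->
  fv phi n -> exists t, In_seq t (tlist phi) /\ term_fv t n.
Proof.
elim=> [R args|t1 t2|f1 f2 _ IH1 _ IH2] /=.
- by case=> i Hi; exists (args i); split => //; apply: In_args.
- by case=> H; [exists t1; split; [left|]|exists t2; split; [right;left|]].
- case=> [/IH1|/IH2] [t [H1 H2]]; exists t; split => //; apply/In_seq_cat; tauto.
Qed.

Definition clo (L : signature) (C : Type) (l : seq nat) (phi : fml L C) : fml L C :=
  foldr (fun n f => FEx n f) phi l.

Lemma sat_clo (L : signature) (C M : Type) (S : structure L M) p (l : seq nat) e (phi : fml L C) :
  sat S p e (clo l phi) <-> exists eps, (forall i, ~ In_seq i l -> eps i = e i) /\ sat S p eps phi.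
Proof.
elim: l e => [|n l IH] e /=.
- split; first by move=> H; exists e; split.
  move=> [eps [He Hs]].
  have -> : e = eps by apply: functional_extensionality => i; rewrite He.
  by [].
- split.
  + move=> [m /IH [eps [He Hs]]]; exists eps; split => // i Hi.
    rewrite He; last by move=> H; apply: Hi; right.
    rewrite /upd; case: eqP => // Hin; exfalso; apply: Hi; by left.
  + move=> [eps [He Hs]]; exists (eps n); apply/IH; exists eps; split => // i Hi.
    rewrite /upd; case: eqP => [->//|Hin]; apply: He => -[H|//]; by apply: Hin.
Qed.

Lemma fv_clo (L : signature) (C : Type) (l : seq nat) (phi : fml L C) n :
  fv (clo l phi) n -> fv phi n /\ ~ In_seq n l.
Proof.
elim: l => [|m l IH] /=; first by move=> H; split.
case=> Hmn /IH [H1 H2]; split => // -[H|H]; [exact: Hmn|exact: H2].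
Qed.

Lemma pp_clo (L : signature) (C : Type) (l : seq nat) (phi : fml L C) :
  atom_conj phi -> pp (clo l phi).
Proof. move=> H; elim: l => [|m l IH] /=; by constructor. Qed.

Definition tv (L : signature) (C : Type) (t : term L C) : nat :=
  match t with TVar n => n.+1 | _ => 0 end.

Definition vb (L : signature) (C : Type) (phi : fml L C) : nat :=
  foldr (fun t acc => maxn acc (tv t)) 0 (tlist phi).

Lemma vb_spec_l (L : signature) (C : Type) (l : seq (term L C)) t n :
  In_seq t l -> term_fv t n -> n < foldr (fun t acc => maxn acc (tv t)) 0 l.
Proof.
elim: l => [|u l IH] //= [Hu|H] Hf.
- subst u; case: t Hf IH => //= m -> _; by rewrite leq_max leqnn orbT.
- by rewrite leq_max IH.
Qed.

Lemma vb_spec (L : signature) (C : Type) (phi : fml L C) t n :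
  In_seq t (tlist phi) -> term_fv t n -> n < vb phi.
Proof. exact: vb_spec_l. Qed.

Lemma vb_spec_var (L : signature) (C : Type) (phi : fml L C) n :
  In_seq (TVar L C n) (tlist phi) -> n < vb phi.
Proof. by move=> H; apply: (vb_spec H). Qed.

Lemma card_lt_inj (X Y M : Type) : card_lt Y M -> (exists h : X -> Y, injective h) -> card_lt X M.
Proof.
move=> [[f fi] nY] [h hi]; split; first by exists (f \o h) => x y /fi /hi.
move=> [g gi]; apply: nY; by exists (h \o g) => x y /hi /gi.
Qed.

Definition shiftM (M : Type) (u : nat -> M) (m : M) : M :=
  match excluded_middle_informative (exists n, u n = m) with
  | left H => u (proj1_sig (constructive_indefinite_description _ H)).+1
  | right _ => m end.

Lemma shiftM_inj (M : Type) (u : nat -> M) : injective u -> injective (shiftM u).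
Proof.
move=> ui x y; rewrite /shiftM.
case: excluded_middle_informative => [Hx|Hx]; case: excluded_middle_informative => [Hy|Hy].
- case: constructive_indefinite_description => n1 Hn1.
  case: constructive_indefinite_description => n2 Hn2 /= /ui [E].
  by rewrite -Hn1 -Hn2 E.
- move=> E; exfalso; apply: Hy; by eexists; exact: E.
- move=> E; exfalso; apply: Hx; by eexists; symmetry; exact: E.
- by [].
Qed.

Lemma shiftM_ne (M : Type) (u : nat -> M) : injective u -> forall m, shiftM u m <> u 0.
Proof.
move=> ui m; rewrite /shiftM; case: excluded_middle_informative => [H|H].
- by move/ui.
- move=> E; apply: H; by exists 0.
Qed.

Definition swapM (M : Type) (x y m : M) : M :=
  match excluded_middle_informative (m = x) with
  | left _ => y
  | right _ => match excluded_middle_informative (m = y) with left _ => x | right _ => m end end.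

Lemma swapM_inv (M : Type) (x y m : M) : swapM x y (swapM x y m) = m.
Proof.
rewrite /swapM.
case: (excluded_middle_informative (m = x)) => [Hmx|Hmx].
- case: (excluded_middle_informative (y = x)) => [Hyx|Hyx]; first by rewrite Hyx Hmx.
  case: (excluded_middle_informative (y = y)) => //.
- case: (excluded_middle_informative (m = y)) => [Hmy|Hmy].
  + case: (excluded_middle_informative (x = x)) => //.
  + case: (excluded_middle_informative (m = x)) => //.
    case: (excluded_middle_informative (m = y)) => //.
Qed.

Lemma swapM_inj (M : Type) (x y : M) : injective (swapM x y).
Proof. by move=> a b E; rewrite -(swapM_inv x y a) E swapM_inv. Qed.

Lemma card_lt_option (A M : Type) : infinite_type M -> card_lt A M -> card_lt (option A) M.
Proof.
move=> [u ui] [[h hi] nA]; split.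
- exists (fun o => match o with None => u 0 | Some a => shiftM u (h a) end).
  move=> [a|] [b|] //=.
  + by move/(shiftM_inj ui)/hi ->.
  + by move/(shiftM_ne ui).
  + by move=> E; exfalso; apply: (@shiftM_ne _ u ui (h b)).
- move=> [g gi].
  case: (classic (exists m0, g m0 = None)) => [[m0 Hm0]|Hno].
  + pose g' m := g (swapM (u 0) m0 (shiftM u m)).
    have g'S m : g' m <> None.
      rewrite /g' -Hm0 => /gi E.
      have := congr1 (swapM (u 0) m0) E; rewrite swapM_inv.
      rewrite /swapM; case: excluded_middle_informative => [H|_].
      * by rewrite H; apply: (shiftM_ne ui).
      * by case: excluded_middle_informative => // _; apply: (shiftM_ne ui).
    case E0: (g' (u 0)) => [a0|]; last by exfalso; exact: (g'S (u 0)).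
    apply: nA; exists (fun m => match g' m with Some a => a | None => a0 end).
    move=> x y; case Ex: (g' x) => [ax|]; last by exfalso; exact: (g'S x).
    case Ey: (g' y) => [ay|]; last by exfalso; exact: (g'S y).
    move=> E; subst; rewrite -Ey in Ex.
    have H1 := gi _ _ Ex.
    have H2 := swapM_inj H1.
    exact: (shiftM_inj ui H2).
  + case E0: (g (u 0)) => [a0|]; last by exfalso; apply: Hno; exists (u 0).
    apply: nA; exists (fun m => match g m with Some a => a | None => a0 end).
    move=> x y; case Ex: (g x) => [ax|]; last by exfalso; apply: Hno; exists x.
    case Ey: (g y) => [ay|]; last by exfalso; apply: Hno; exists y.
    by move=> E; subst; rewrite -Ey in Ex; move: Ex => /gi.
Qed.

Lemma card_lt_sum (k : nat) (A M : Type) : infinite_type M -> card_lt A M -> card_lt ('I_k + A) M.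
Proof.
move=> Minf; elim: k A => [|k IH] A HA.
- apply: (card_lt_inj HA); exists (fun c => match c with inl i => match i with Ordinal n H => False_rect A (Bool.diff_false_true (etrans (esym (ltn0 n)) H)) end | inr a => a end).
  by move=> [[? ?]|a] // [[? ?]|b] //= ->.
- apply: (card_lt_inj (IH _ (card_lt_option Minf HA))).
  exists (fun c => match c with
    | inl i => match unlift ord_max i with Some j => inl j | None => inr None end
    | inr a => inr (Some a) end).
  move=> [i|a] [j|b] //=.
  + case: unliftP => [i' ->|->]; case: unliftP => [j' ->|->] //.
    by case=> ->.
  + by case: unliftP => [i' ->|->].
  + by case: unliftP => [j' ->|->].
  + by case=> ->.
Qed.

Definition sumf (A B T : Type) (f : A -> T) (g : B -> T) (c : A + B) : T :=
  match c with inl x => f x | inr y => g y end.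
Definition optf (C T : Type) (d : T) (f : C -> T) (o : option C) : T :=
  match o with None => d | Some c => f c end.

Definition subst0 (L : signature) (C : Type) (t : term L (option C)) : term L C :=
  match t with
  | TVar n => TVar L C n.+1
  | TConst c => TConst C c
  | TParam None => TVar L C 0
  | TParam (Some c) => TParam L c end.

Definition tshift (L : signature) (C : Type) (O : nat) (t : term L C) : term L C :=
  match t with TVar n => TVar L C (n + O) | t => t end.

Lemma In_iota i s n : In_seq i (iota s n) <-> s <= i < s + n.
Proof. by rewrite In_seq_mem mem_iota. Qed.

Lemma sat_to (L : signature) (C C' M : Type) (S : structure L M) (s : term L C -> term L C')
  p e p' e' (phi : fml L C) : atom_conj phi ->
  (forall t, In_seq t (tlist phi) -> eval_term S p' e' (s t) = eval_term S p e t) ->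
  sat S p e phi -> sat S p' e' (fmapt s phi).
Proof. by move=> H1 H2; case: (sat_fmapt H1 H2). Qed.

Lemma sat_from (L : signature) (C C' M : Type) (S : structure L M) (s : term L C -> term L C')
  p e p' e' (phi : fml L C) : atom_conj phi ->
  (forall t, In_seq t (tlist phi) -> eval_term S p' e' (s t) = eval_term S p e t) ->
  sat S p' e' (fmapt s phi) -> sat S p e phi.
Proof. by move=> H1 H2; case: (sat_fmapt H1 H2). Qed.

Definition chiof (L : signature) (C : Type) (th : fml L (option C)) : fml L C :=
  clo (iota 1 (vb th)) (fmapt (@subst0 L C) th).

Lemma fv_chiof (L : signature) (C : Type) (th : fml L (option C)) n :
  atom_conj th -> fv (chiof th) n -> n = 0.
Proof.
move=> Hac /fv_clo [H1 H2].
have [t [Ht Hf]] := fv_ac (ac_fmapt (@subst0 L C) Hac) H1.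
rewrite tlist_fmapt // in Ht.
have [t0 [Ht0 Et]] := In_seq_map_inv Ht; subst t.
clear Ht; case: t0 Ht0 Hf => [v|c|[c|]] /= Hin Hf; [|by []|by []|by []].
exfalso; apply: H2; apply/In_iota; subst n.
by rewrite /= add1n ltnS (vb_spec_var Hin).
Qed.

Lemma chiof_sat (L : signature) (C M : Type) (S : structure L M) (qP : C -> M) m
  (th : fml L (option C)) eps :
  atom_conj th -> sat S (optf m qP) eps th -> sat S qP (fun _ => m) (chiof th).
Proof.
move=> Hac Hs; apply/sat_clo.
exists (fun i => if i == 0 then m else if i <= vb th then eps i.-1 else m); split.
- move=> i Hi; case: ifP => // /negbT i0; case: ifP => // ile; exfalso; apply: Hi.
  apply/In_iota; rewrite add1n ltnS ile andbT; by rewrite lt0n.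
- apply: (sat_to Hac _ Hs) => t Ht; case: t Ht => [v|c|[c|]] Ht //=.
  by rewrite (vb_spec_var Ht).
Qed.

Lemma chiof_sat_inv (L : signature) (C M : Type) (S : structure L M) (qP : C -> M) m
  (th : fml L (option C)) :
  atom_conj th -> sat S qP (fun _ => m) (chiof th) -> exists eps, sat S (optf m qP) eps th.
Proof.
move=> Hac /sat_clo [eps [He Hs]].
exists (fun n => eps n.+1); apply: (sat_from Hac _ Hs) => t Ht.
case: t Ht => [v|c|[c|]] Ht //=.
by rewrite He // => /In_iota.
Qed.

Lemma merge_lemma (L : signature) (C0 M : Type) (S : structure L M) (d : nat -> M)
  (pP : C0 -> nat -> M) (qP : C0 -> M) (l : seq (fml L C0)) :
  (forall chi, In_seq chi l -> exists th, atom_conj th /\ chi = chiof th /\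
       exists eps, sat (power S) (optf d pP) eps th) ->
  exists Th, atom_conj Th /\ (exists eps, sat (power S) (optf d pP) eps Th) /\
    forall m eps, sat S (optf m qP) eps Th -> forall chi, In_seq chi l -> sat S qP (fun _ => m) chi.
Proof.
elim: l => [|chi l IH] Hl.
- exists (FEq (TVar L _ 0) (TVar L _ 0)); split; first by constructor.
  split; first by exists (fun _ => d).
  by [].
- have [Th [HacT [[epsT HsT] HrT]]] : exists Th, atom_conj Th /\ (exists eps, sat (power S) (optf d pP) eps Th) /\
    forall m eps, sat S (optf m qP) eps Th -> forall chi, In_seq chi l -> sat S qP (fun _ => m) chi.
    by apply: IH => c Hc; apply: Hl; right.
  have [th [Hac [-> [epsc Hsc]]]] := Hl chi (or_introl erefl).
  pose O := vb Th.
  exists (FAnd (fmapt (@tshift L _ O) th) Th); split; first by constructor => //; apply: ac_fmapt.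
  split.
  + exists (fun n => if n < O then epsT n else epsc (n - O)) => /=; split.
    * apply: (sat_to Hac _ Hsc) => t Ht; case: t Ht => [v|c|c] Ht //=.
      by rewrite ltnNge leq_addl /= addnK.
    * rewrite -(fmapt_id Th); apply: (sat_to HacT _ HsT) => t Ht; case: t Ht => [v|c|c] Ht //=.
      by rewrite (vb_spec_var Ht).
  + move=> m eps /= [H1 H2] c [<-|Hc]; last exact: (HrT m eps H2).
    apply: (chiof_sat (eps := fun n => eps (n + O))) => //.
    by apply: (sat_from Hac _ H1) => t Ht; case: t Ht.
Qed.

Definition tmapp (L : signature) (C C' : Type) (h : C -> C') (t : term L C) : term L C' :=
  match t with
  | TVar n => TVar L C' n
  | TConst c => TConst C' c
  | TParam c => TParam L (h c) end.

Definition elist (L : signature) (A E : Type) (l : seq (term L (A + E))) : seq E :=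
  foldr (fun t acc => match t with TParam (inr y) => y :: acc | _ => acc end) [::] l.

Lemma elist_in (L : signature) (A E : Type) (l : seq (term L (A + E))) y :
  In_seq (TParam L (inr y)) l -> In_seq y (elist l).
Proof.
elim: l => [|t l IH] //= [Et|Hl]; first by subst t; left.
case: t => [?|?|[?|?]]; [exact: IH|exact: IH|exact: IH|right; exact: IH].
Qed.

Lemma elist_in_inv (L : signature) (A E : Type) (l : seq (term L (A + E))) y :
  In_seq y (elist l) -> In_seq (TParam L (inr y)) l.
Proof.
elim: l => [|t l IH] //=.
case: t => [?|?|[?|?]] H; try (right; exact: IH H).
case: H => [<-|H]; [by left|right; exact: IH].
Qed.

Lemma max_seq (E : Type) (R : E -> E -> Prop) (Rtot : forall x y, R x y \/ R y x)
  (Rtrans : forall x y z, R x y -> R y z -> R x z) (l : seq E) :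
  (exists y, In_seq y l) -> exists y0, In_seq y0 l /\ forall y, In_seq y l -> R y y0.
Proof.
elim: l => [|x l IH]; first by case.
move=> _; case: (classic (exists y, In_seq y l)) => [/IH [y0 [H1 H2]]|Hno].
- case: (Rtot x y0) => Hxy.
  + exists y0; split; first by right.
    by move=> y /= [<-|Hy]; [exact: Hxy|apply: H2].
  + exists x; split; first by left.
    move=> y /= [<-|Hy]; first by case: (Rtot x x).
    exact: (Rtrans _ _ _ (H2 y Hy) Hxy).
- exists x; split; first by left.
  move=> y /= [<-|Hy]; first by case: (Rtot x x).
  by exfalso; apply: Hno; exists y.
Qed.

Lemma base_case (L : signature) (M : Type) (S : structure L M) (k : nat)
  (a : 'I_k -> nat -> M) (b : 'I_k -> M)
  (H : forall phi : fml L 'I_k, pp phi -> sentence phi -> holds (power S) a phi -> holds S b phi)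
  (inhM : inhabited M) (E : Type) (e : E -> nat -> M) (g : E -> M) th :
  atom_conj th -> (forall y, ~ In_seq y (elist (tlist th))) ->
  (exists eps, sat (power S) (sumf a e) eps th) -> exists eps, sat S (sumf b g) eps th.
Proof.
move=> Hac Hno [eps Hs].
have [th0 [Hac0 Eth]] : exists th0, atom_conj th0 /\ fmapt (@tmapp L _ _ inl) th0 = th.
  apply: preimage_ac => // t Ht; case: t Ht => [v|c|[i|y]] Ht.
  - by exists (TVar L _ v).
  - by exists (TConst _ c).
  - by exists (TParam L i).
  - by exfalso; apply: (Hno y); apply: elist_in.
subst th.
pose N := vb th0.
have sent : sentence (clo (iota 0 N) th0).
  move=> n /fv_clo [H1 H2]; have [t [Ht Hf]] := fv_ac Hac0 H1.
  apply: H2; apply/In_iota; rewrite add0n /=; exact: (vb_spec Ht Hf).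
have hp : holds (power S) a (clo (iota 0 N) th0).
  move=> e0; apply/sat_clo; exists (fun n => if n < N then eps n else e0 n); split.
  - move=> i Hi; case: ifP => // iN; exfalso; apply: Hi; apply/In_iota; by rewrite add0n.
  - apply: (sat_from Hac0 _ Hs) => t Ht; case: t Ht => [v|c|i] Ht //=.
    by rewrite (vb_spec_var Ht).
case: inhM => m.
have := H _ (pp_clo _ Hac0) sent hp (fun _ => m).
move/sat_clo => [eps2 [_ Hs2]]; exists eps2.
by apply: (sat_to Hac0 _ Hs2) => t Ht; case: t Ht.
Qed.

Lemma main_lemma (L : signature) (M : Type) (S : structure L M) (k : nat)
  (a : 'I_k -> nat -> M) (b : 'I_k -> M)
  (H : forall phi : fml L 'I_k, pp phi -> sentence phi -> holds (power S) a phi -> holds S b phi)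
  (Hsat : saturated S)
  (E : Type) (R : E -> E -> Prop)
  (Rtot : forall x y, R x y \/ R y x) (Ranti : forall x y, R x y -> R y x -> x = y)
  (Rtrans : forall x y z, R x y -> R y z -> R x z)
  (Rmin : forall P : E -> Prop, (exists x, P x) -> exists z, P z /\ forall x, P x -> R z x)
  (D : E -> Prop) (Ddown : forall x y, D x -> R y x -> D y)
  (e : E -> nat -> M) (esurj : forall z, exists y, D y /\ e y = z)
  (Hcard : forall x, D x -> card_lt {y | R y x /\ y <> x} M) :
  exists f : (nat -> M) -> M, hom (power S) S f /\ forall i, f (a i) = b i.
Proof.
have [Minf Hsat'] := Hsat.
have inhM : inhabited M by case: Minf => u _; exact: (inhabits (u 0)).
pose lt y x := R y x /\ y <> x.
have wf : well_founded lt.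
  move=> x; apply: NNPP => nA.
  have [z [nAz Hz]] := Rmin (fun y => ~ Acc lt y) (ex_intro _ x nA).
  apply: nAz; constructor => w [Rwz nwz]; apply: NNPP => nAw.
  by apply: nwz; apply: Ranti => //; apply: Hz.
pose Ix x := ('I_k + {y | lt y x})%type.
pose iox x : Ix x -> 'I_k + E := sumf inl (fun yy : {y | lt y x} => inr (proj1_sig yy)).
pose pT x : option (Ix x) -> nat -> M := optf (e x) (sumf a e \o iox x).
pose Sig x (chi : fml L (Ix x)) := exists th, atom_conj th /\ chi = chiof th /\
   exists eps, sat (power S) (pT x) eps th.
pose qI x (prev : forall y, lt y x -> M) : Ix x -> M :=
  sumf b (fun yy : {y | lt y x} => prev (proj1_sig yy) (proj2_sig yy)).
pose step x (prev : forall y, lt y x -> M) : M :=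
  epsilon inhM (fun m => forall chi, Sig x chi -> sat S (qI x prev) (fun _ => m) chi).
pose g := Fix wf (fun _ => M) step.
have geq x : g x = step x (fun y _ => g y).
  apply: (Fix_eq wf (fun _ => M) step) => y f1 f2 Hf.
  have -> : f1 = f2.
    apply: functional_extensionality_dep => w; apply: functional_extensionality_dep => p.
    exact: Hf.
  by [].
pose Good th := (exists eps, sat (power S) (sumf a e) eps th) -> exists eps, sat S (sumf b g) eps th.
pose Inv x := forall th, atom_conj th -> (forall y, In_seq y (elist (tlist th)) -> R y x) -> Good th.
have reduce (Q : E -> Prop) th : (forall y0, Q y0 -> Inv y0) -> atom_conj th ->
    (forall y, In_seq y (elist (tlist th)) -> Q y) -> Good th.
  move=> HQ Hac Hy.
  case: (classic (exists y, In_seq y (elist (tlist th)))) => [Hex|Hno].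
  - have [y0 [Hy0 Hmax]] := max_seq Rtot Rtrans Hex.
    exact: (HQ y0 (Hy y0 Hy0) th Hac Hmax).
  - apply: (base_case H inhM) => // y Hin; apply: Hno; by exists y.
have allInv : forall x, D x -> Inv x.
  move=> x; elim/(well_founded_ind wf): x => x IH Dx.
  have Prev th : atom_conj th -> (forall y, In_seq y (elist (tlist th)) -> lt y x) -> Good th.
    apply: reduce => y0 Hy0; apply: IH => //; exact: (Ddown _ _ Dx (proj1 Hy0)).
  have qIeq : qI x (fun y _ => g y) = sumf b g \o iox x.
    by apply: functional_extensionality => -[i|yy].
  have Hreal : forall chi, Sig x chi -> sat S (sumf b g \o iox x) (fun _ => g x) chi.
    rewrite -qIeq geq.
    apply: (epsilon_spec inhM (fun m => forall chi, Sig x chi -> sat S (qI x (fun y _ => g y)) (fun _ => m) chi)).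
    rewrite qIeq.
    apply: (Hsat' (Ix x) (sumf b g \o iox x) (Sig x)).
    - exact: (card_lt_sum k Minf (Hcard x Dx)).
    - by move=> chi [th [Hac [-> _]]] n; apply: fv_chiof.
    - move=> l Hl.
      have [Th [HacT [[epsT HsT] HrT]]] := @merge_lemma L (Ix x) M S (e x) (sumf a e \o iox x)
          (sumf b g \o iox x) l (fun chi Hc => Hl chi Hc).
      pose Psi := fmapt (@tmapp L _ _ (iox x)) (fmapt (@subst0 L _) Th).
      have HacP : atom_conj Psi by do 2 apply: ac_fmapt.
      have [eps' HsP] : exists eps, sat S (sumf b g) eps Psi.
        apply: Prev => //.
        + move=> y Hy; have := elist_in_inv Hy.
          rewrite /Psi tlist_fmapt; last exact: ac_fmapt.
          rewrite tlist_fmapt // => H2.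
          have [t1 [Ht1 Et]] := In_seq_map_inv H2.
          have [t0 [_ Et0]] := In_seq_map_inv Ht1; subst t1.
          case: t0 Et {Ht1 H2 Hy} => [?|?|[[?|[yy Hyy]]|]] //= [Ey]; by rewrite Ey.
        + exists (fun n => if n == 0 then e x else epsT n.-1).
          apply: (sat_to (ac_fmapt _ HacT) _ (_ : sat (power S) (sumf a e \o iox x) _ _)).
          * by move=> t _; case: t.
          * by apply: (sat_to HacT _ HsT) => t _; case: t => [?|?|[?|]].
      exists (eps' 0); apply: (HrT (eps' 0) (fun n => eps' n.+1)).
      have H1 : sat S (sumf b g \o iox x) eps' (fmapt (@subst0 L _) Th).
        by apply: (sat_from (ac_fmapt _ HacT) _ HsP) => t _; case: t.
      by apply: (sat_from HacT _ H1) => t _; case: t => [?|?|[?|]].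
  move=> th Hac Hb [eps Hs].
  pose io := optf (inr x) (iox x).
  have [th' [Hac' Eth]] : exists th', atom_conj th' /\ fmapt (@tmapp L _ _ io) th' = th.
    apply: preimage_ac => // t Ht; case: t Ht => [v|c|[i|y]] Ht.
    - by exists (TVar L _ v).
    - by exists (TConst _ c).
    - by exists (TParam L (Some (inl i) : option (Ix x))).
    - have Ryx := Hb y (elist_in Ht).
      case: (classic (y = x)) => [->|nyx].
      + by exists (TParam L (None : option (Ix x))).
      + by exists (TParam L (Some (inr (exist _ y (conj Ryx nyx))) : option (Ix x))).
  subst th.
  have Hs' : sat (power S) (pT x) eps th' by apply: (sat_from Hac' _ Hs) => t _; case: t => [?|?|[?|]].
  have := Hreal _ (ex_intro _ th' (conj Hac' (conj erefl (ex_intro _ eps Hs')))).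
  move/(chiof_sat_inv Hac') => [eps2 Hs2]; exists eps2.
  by apply: (sat_to Hac' _ Hs2) => t _; case: t => [?|?|[?|]].
have Bnd th : atom_conj th -> (forall y, In_seq y (elist (tlist th)) -> D y) -> Good th.
  by apply: reduce => y0 Hy0; apply: allInv.
pose yof z := proj1_sig (constructive_indefinite_description _ (esurj z)).
have yofD z : D (yof z) by rewrite /yof; case: constructive_indefinite_description => y [].
have yofe z : e (yof z) = z by rewrite /yof; case: constructive_indefinite_description => y [].
have [m] := inhM.
exists (fun z => g (yof z)); split; first split.
- move=> Rr x Hx.
  pose th := FRel (fun i => TParam L (@inr 'I_k E (yof (x i)))).
  have [eps Hs] : exists eps, sat S (sumf b g) eps th.
    apply: Bnd; first by constructor.
    + move=> y Hy; have H2 := elist_in_inv Hy.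
      have [i [_ Ei]] := In_seq_map_inv H2.
      by case: Ei => ->; exact: yofD.
    + exists (fun _ _ => m).
      have Ex : (fun i => e (yof (x i))) = x by apply: functional_extensionality => i; rewrite yofe.
      change (rinterp (power S) (fun i => e (yof (x i)))); rewrite Ex; exact: Hx.
  exact: Hs.
- move=> c.
  pose th := FEq (TConst _ c) (TParam L (@inr 'I_k E (yof (fun _ => cinterp S c)))).
  have [eps Hs] : exists eps, sat S (sumf b g) eps th.
    apply: Bnd; first by constructor.
    + move=> y /= [<-|[]]; exact: yofD.
    + by exists (fun _ _ => m) => /=; rewrite yofe.
  exact: (esym Hs).
- move=> i.
  pose th := FEq (TParam L (@inl 'I_k E i)) (TParam L (@inr 'I_k E (yof (a i)))).
  have [eps Hs] : exists eps, sat S (sumf b g) eps th.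
    apply: Bnd; first by constructor.
    + move=> y /= [<-|[]]; exact: yofD.
    + by exists (fun _ _ => m) => /=; rewrite yofe.
  exact: (esym Hs).
Qed.

From mathcomp Require Import boolp wochoice.

Lemma wo_exists (M : Type) : exists R : M -> M -> Prop,
  (forall x y, R x y \/ R y x) /\ (forall x y, R x y -> R y x -> x = y) /\
  (forall x y z, R x y -> R y z -> R x z) /\
  (forall P : M -> Prop, (exists x, P x) -> exists z, P z /\ forall x, P x -> R z x).
Proof.
have [R wo] := well_ordering_principle {classic M}.
have minP (P : M -> Prop) : (exists x, P x) ->
    exists z, P z /\ (forall x, P x -> R z x) /\ (forall z', P z' -> (forall x, P x -> R z' x) -> z' = z).
  move=> [x Px].
  have ne : nonempty [pred y : {classic M} | `[< P y >]].
    by exists x; rewrite inE; apply/asboolP.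
  have [z [[Hz Hlb] Hu]] := wo _ ne.
  exists z; split; first by move: Hz; rewrite inE => /asboolP.
  split.
  - move=> y Py; apply: Hlb; rewrite inE; exact/asboolP.
  - move=> z' Pz' Hz'; symmetry; apply: Hu; split.
    + rewrite inE; exact/asboolP.
    + move=> y; rewrite inE => /asboolP; exact: Hz'.
have refl x : R x x.
  have [z [Pz [H _]]] := minP (fun y => y = x) (ex_intro _ x erefl).
  by subst z; apply: H.
have anti x y : R x y -> R y x -> x = y.
  move=> Hxy Hyx.
  have [z [Pz [H U]]] := minP (fun w => w = x \/ w = y) (ex_intro _ x (or_introl erefl)).
  have -> : x = z by apply: U; [left|move=> w [->|->]].
  symmetry; apply: U; [right|move=> w [->|->]] => //.
have tot x y : R x y \/ R y x.
  have [z [[->|->] [H _]]] := minP (fun w => w = x \/ w = y) (ex_intro _ x (or_introl erefl)).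
  - by left; apply: H; right.
  - by right; apply: H; left.
exists (fun x y => R x y); split => //; split => //; split.
- move=> x y z Hxy Hyz.
  have [w [Pw [H _]]] := minP (fun w => w = x \/ w = y \/ w = z) (ex_intro _ x (or_introl erefl)).
  case: Pw => [Ew|[Ew|Ew]]; subst w.
  + by apply: H; right; right.
  + by rewrite (anti x y Hxy (H x (or_introl erefl))).
  + by rewrite (anti y z Hyz (H y (or_intror (or_introl erefl)))) in Hxy.
- move=> P /minP [z [Pz [H _]]]; by exists z.
Qed.

Lemma sig_inj (A : Type) (P : A -> Prop) : injective (@proj1_sig A P).
Proof.
move=> [x Hx] [y Hy] /= E; subst y; f_equal; apply: proof_irrelevance.
Qed.

Theorem lemma3 (L : signature) (M : Type) (S : structure L M) :
  saturated S ->
  (exists f : M -> (nat -> M), bijective f) ->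
  hom_lifting S.
Proof.
move=> Hsat [F [G FG GF]] k a b H.
have [Minf _] := Hsat.
have inhM : inhabited M by case: Minf => u _; exact: (inhabits (u 0)).
have [R [Rtot [Ranti [Rtrans Rmin]]]] := wo_exists M.
case: (Classical_Prop.classic (exists x, exists j : M -> {y | R y x /\ y <> x}, injective j)) => [Hex|Hno].
- have [x0 [[j0 j0i] Hmin0]] := Rmin _ Hex.
  apply: (@main_lemma L M S k a b H Hsat M R Rtot Ranti Rtrans Rmin (fun y => R y x0 /\ y <> x0)
     _ (fun y => F (epsilon inhM (fun m => proj1_sig (j0 m) = y)))).
  + move=> x y [Rxx0 nx] Ryx; split; first exact: Rtrans Ryx Rxx0.
    move=> E; subst y; apply: nx; exact: Ranti.
  + move=> z; exists (proj1_sig (j0 (G z))); split; first exact: proj2_sig (j0 (G z)).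
    have := epsilon_spec inhM (fun m => proj1_sig (j0 m) = proj1_sig (j0 (G z))) (ex_intro _ (G z) erefl).
    by move/sig_inj/j0i => ->; rewrite GF.
  + move=> x [Rxx0 nx]; split; first by exists (@proj1_sig _ _); exact: sig_inj.
    move=> Hj; apply: nx; apply: Ranti => //; exact: Hmin0.
- apply: (@main_lemma L M S k a b H Hsat M R Rtot Ranti Rtrans Rmin (fun _ => True) _ F).
  + by [].
  + by move=> z; exists (G z); rewrite GF.
  + move=> x _; split; first by exists (@proj1_sig _ _); exact: sig_inj.
    move=> Hj; apply: Hno; by exists x.
Qed.
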